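(* Let $G=(V,E,c_V,c_E)$ be a capacitated graph such that, in the execution of Rising-Tide on $G$, no two vertices become saturated simultaneously, and let $\mu$ be the output of Rising-Tide on $G$ and $D_G$ its dependency graph. Then: (1) for any two edges $e_1,e_2\in E$, if $e_1$ is removed from the working set $E'$ before $e_2$, then $\mu(e_1)<\mu(e_2)$; (2) for each $u\in V$, all edges directed towards $u$ in $D_G$ have the same $\mu$-value; (3) for any edge $u\to v$ of $D_G$ and any edge $(v,w)\in E$, $\mu(u,v)\ge\mu(v,w)$; (4) for any walk $u_0\to u_1\to u_2\to\cdots$ in $D_G$, $\mu(u_0,u_1)\ge\mu(u_1,u_2)\ge\cdots$; (5) $D_G$ is a directed acyclic graph.
   Context: Capacitated graphs have nonnegative vertex capacities $c_V$ and edge capacities $c_E$; edges may include self-loops, and in $\sum_j\mu(i,j)$ a self-loop at $i$ counts once. A feasible fractional matching $\mu:E\to\mathbb{R}_{\ge0}$ satisfies $\mu(e)\le c_E(e)$ and $\sum_j\mu(i,j)\le c_V(i)$. Vertex $i$ is saturated if $\sum_j\mu(i,j)=c_V(i)$; edge $e$ is saturated if $\mu(e)=c_E(e)$. Rising-Tide: set $E'=\{e\in E:c_E(e)>0\}$ and $\mu\equiv0$; while $E'\ne\emptyset$: choose the maximum $\delta\ge0$ such that $\mu+\delta\mathbf{1}_{E'}$ is feasible, set $\mu\gets\mu+\delta\mathbf{1}_{E'}$, and remove from $E'$ every edge $(i,j)$ such that $i$, $j$, or $(i,j)$ is saturated; return $\mu$. Dependency graph $D_G$: the directed graph on vertex set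 $V$ which, for each edge $(i,j)\in E$, contains the directed edge $j\to i$ if $i$ is saturated at the moment $(i,j)$ is removed from $E'$, and contains $i\to j$ if $j$ is saturated at that moment (possibly both). *)

(* Defs.v *)
From HB Require Import structures.
From mathcomp Require Import all_boot all_order all_algebra.
From mathcomp Require Import reals.
Set Implicit Arguments. Unset Strict Implicit. Unset Printing Implicit Defensive.
Import Order.TTheory GRing.Theory Num.Theory.
Local Open Scope ring_scope.

(* Edges: E : {set {set V}}, each edge being a set of
   one (self-loop (i,i) = [set i]) or two (edge (i,j) = [set i; j]) vertices. *)

Definition cap_graph (R : realType) (V : finType) (E : {set {set V}})
    (cV : V -> R) (cE : {set V} -> R) : Prop :=
  [/\ forall e, e \in E -> (0 < #|e| <= 2)%N,
      forall i, 0 <= cV i &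
      forall e, e \in E -> 0 <= cE e].

(* sum_j mu(i,j); a self-loop (j = i, edge [set i]) is counted once *)
Definition load (R : realType) (V : finType) (E : {set {set V}})
    (mu : {set V} -> R) (i : V) : R :=
  \sum_(j : V | [set i; j] \in E) mu [set i; j].

Definition feasible (R : realType) (V : finType) (E : {set {set V}})
    (cV : V -> R) (cE : {set V} -> R) (mu : {set V} -> R) : Prop :=
  (forall e, e \in E -> 0 <= mu e <= cE e) /\
  (forall i, load E mu i <= cV i).

Definition vsat (R : realType) (V : finType) (E : {set {set V}})
    (cV : V -> R) (mu : {set V} -> R) (i : V) : bool :=
  load E mu i == cV i.

Definition esat (R : realType) (V : finType) (cE : {set V} -> R)
    (mu : {set V} -> R) (e : {set V}) : bool :=
  mu e == cE e.

Definition tide_step (R : realType) (V : finType) (mu : {set V} -> R)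
    (Ep : {set {set V}}) (delta : R) : {set V} -> R :=
  fun e => mu e + (if e \in Ep then delta else 0).

Definition removable (R : realType) (V : finType) (E : {set {set V}})
    (cV : V -> R) (cE : {set V} -> R) (mu : {set V} -> R) (e : {set V}) : bool :=
  esat cE mu e || [exists i in e, vsat E cV mu i].

(* An execution of Rising-Tide with n iterations of the while loop:
   mu k and Ep k are the matching and the working set E' before iteration k+1
   (mu 0 = 0, Ep 0 = {e | c_E(e) > 0}); the loop stops at Ep n = set0. *)
Definition rising_tide_run (R : realType) (V : finType) (E : {set {set V}})
    (cV : V -> R) (cE : {set V} -> R) (n : nat)
    (mu : nat -> {set V} -> R) (Ep : nat -> {set {set V}}) : Prop :=
  [/\ mu 0%N = (fun _ => 0),
      Ep 0%N = [set e in E | 0 < cE e],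
      Ep n = set0,
      (forall k, (k < n)%N -> Ep k != set0) &
      (forall k, (k < n)%N -> exists delta : R,
         [/\ 0 <= delta,
             feasible E cV cE (tide_step (mu k) (Ep k) delta),
             (forall d, 0 <= d -> feasible E cV cE (tide_step (mu k) (Ep k) d)
                        -> d <= delta),
             mu k.+1 = tide_step (mu k) (Ep k) delta &
             Ep k.+1 = [set e in Ep k | ~~ removable E cV cE (mu k.+1) e]])].

(* edge e is removed from E' during iteration k+1 (k < n) *)
Definition removed_at (V : finType) (n : nat) (Ep : nat -> {set {set V}})
    (e : {set V}) (k : nat) : bool :=
  [&& (k < n)%N, e \in Ep k & e \notin Ep k.+1].

(* vertex v becomes saturated at step k (k = 0: already saturated by mu = 0) *)
Definition first_sat (R : realType) (V : finType) (E : {set {set V}})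
    (cV : V -> R) (mu : nat -> {set V} -> R) (v : V) (k : nat) : Prop :=
  vsat E cV (mu k) v /\ forall k', (k' < k)%N -> ~~ vsat E cV (mu k') v.

Definition depgraph (R : realType) (V : finType) (E : {set {set V}})
    (cV : V -> R) (n : nat) (mu : nat -> {set V} -> R)
    (Ep : nat -> {set {set V}}) : rel V :=
  fun u v => [exists k : 'I_n, removed_at n Ep [set u; v] k
                               && vsat E cV (mu k.+1) v].

(* Main.v *)
Require Import Defs.
From HB Require Import structures.
From mathcomp Require Import all_boot all_order all_algebra.
From mathcomp Require Import reals.
From Stdlib Require Import FunctionalExtensionality.
Import Order.TTheory GRing.Theory Num.Theory.
Local Open Scope ring_scope.

Theorem lemma20 (R : realType) (V : finType) (E : {set {set V}})
    (cV : V -> R) (cE : {set V} -> R) (n : nat)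
    (mu : nat -> {set V} -> R) (Ep : nat -> {set {set V}}) :
  cap_graph E cV cE ->
  rising_tide_run E cV cE n mu Ep ->
  (* no two vertices become saturated simultaneously *)
  (forall u v k, (k <= n)%N -> u != v ->
     first_sat E cV mu u k -> first_sat E cV mu v k -> False) ->
  let muF := mu n in
  let D := depgraph E cV n mu Ep in
  [/\ (* (1) *)
      (forall e1 e2 k1 k2, (k1 < k2)%N ->
         removed_at n Ep e1 k1 -> removed_at n Ep e2 k2 -> muF e1 < muF e2),
      (* (2) *)
      (forall u a b, D a u -> D b u -> muF [set a; u] = muF [set b; u]),
      (* (3) *)
      (forall u v w, D u v -> [set v; w] \in E -> muF [set v; w] <= muF [set u; v]),
      (* (4) *)
      (forall (u0 : V) (s : seq V), path D u0 s ->
         sorted (fun x y => y <= x) (pairmap (fun a b => muF [set a; b]) u0 s)) &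
      (* (5) acyclic: no directed cycle through two distinct vertices *)
      (forall u v, u != v -> D u v -> ~~ connect D v u)].
Proof.
move=> [Hcard HcV HcE] [Hmu0 HEp0 HEpn HEpne Hstep] Hns; cbv zeta.
have EpS : forall k, (k < n)%N -> Ep k.+1 \subset Ep k.
  move=> k kn; have [d [_ _ _ _ ->]] := Hstep k kn.
  by apply/subsetP => e; rewrite inE => /andP[].
have EpA : forall i j, (i <= j)%N -> (j <= n)%N -> Ep j \subset Ep i.
  move=> i j; elim: j => [|j IH] ij jn.
    by move: ij; rewrite leqn0 => /eqP ->.
  move: ij; rewrite leq_eqVlt => /orP[/eqP->|]; first exact: subxx.
  rewrite ltnS => ij.
  exact: subset_trans (EpS j jn) (IH ij (ltnW jn)).
have EpE : forall k, (k <= n)%N -> Ep k \subset E.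
  move=> k kn; apply: subset_trans (EpA 0%N k (leq0n _) kn) _.
  by rewrite HEp0; apply/subsetP => e; rewrite inE => /andP[].
have muM : forall e i j, (i <= j)%N -> (j <= n)%N -> mu i e <= mu j e.
  move=> e i j; elim: j => [|j IH] ij jn.
    by move: ij; rewrite leqn0 => /eqP ->.
  move: ij; rewrite leq_eqVlt => /orP[/eqP->|]; first by [].
  rewrite ltnS => ij.
  have [d [d0 _ _ -> _]] := Hstep j jn.
  apply: le_trans (IH ij (ltnW jn)) _.
  by rewrite /tide_step lerDl; case: ifP.
have Fz : forall e i j, e \notin Ep i -> (i <= j)%N -> (j <= n)%N -> mu j e = mu i e.
  move=> e i j ein; elim: j => [|j IH] ij jn.
    by move: ij; rewrite leqn0 => /eqP ->.
  move: ij; rewrite leq_eqVlt => /orP[/eqP->|]; first by [].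
  rewrite ltnS => ij.
  have [d [d0 _ _ -> _]] := Hstep j jn.
  have ejn : e \notin Ep j.
    apply: contra ein => H; exact: (subsetP (EpA i j ij (ltnW jn)) e H).
  by rewrite /tide_step (negbTE ejn) addr0 IH // ltnW.
have loadF : forall j x, (j <= n)%N -> load E (mu j) x <= cV x.
  move=> [|j] x jn.
    by rewrite /load Hmu0 big1 //.
  by have [d [_ [_ Hl] _ -> _]] := Hstep j jn.
have loadM : forall i j x, (i <= j)%N -> (j <= n)%N -> load E (mu i) x <= load E (mu j) x.
  by move=> i j x ij jn; apply: ler_sum => y _; exact: muM.
have vsatM : forall i j x, vsat E cV (mu i) x -> (i <= j)%N -> (j <= n)%N -> vsat E cV (mu j) x.
  move=> i j x; rewrite /vsat => /eqP Hi ij jn.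
  apply/eqP/le_anti/andP; split; first exact: loadF.
  rewrite -Hi; exact: loadM.
have L : forall j f, (j <= n)%N -> f \in Ep j -> forall e, mu j e <= mu j f.
  elim=> [|j IH] f jn fin e; first by rewrite Hmu0.
  have fj : f \in Ep j by exact: (subsetP (EpS j jn) f fin).
  have [d [d0 _ _ -> _]] := Hstep j jn.
  rewrite /tide_step fj; apply: lerD; first exact: IH (ltnW jn) fj e.
  by case: ifP.
have L' : forall j f, (j < n)%N -> f \in Ep j -> forall e, mu j.+1 e <= mu j.+1 f.
  move=> j f jn fj e.
  have [d [d0 _ _ -> _]] := Hstep j jn.
  rewrite /tide_step fj; apply: lerD; first exact: L (ltnW jn) fj e.
  by case: ifP.
have NR : forall j k e x, (j < k)%N -> (k <= n)%N -> e \in Ep k -> x \in e ->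
    vsat E cV (mu j.+1) x -> False.
  move=> j k e x jk kn eE xe sx.
  have jn : (j < n)%N by apply: leq_trans jk kn.
  have := subsetP (EpA j.+1 k jk kn) e eE.
  have [d [_ _ _ _ ->]] := Hstep j jn.
  rewrite inE => /andP[_]; rewrite /removable negb_or => /andP[_].
  by move/existsPn => /(_ x); rewrite xe sx.
have stay : forall k e d, (0 < k)%N -> (k < n)%N -> e \in Ep k -> e \notin Ep k.+1 ->
    mu k.+1 = tide_step (mu k) (Ep k) d -> d = 0 -> False.
  move=> k e d k0 kn eE eN Hm dz.
  have [d2 [_ _ _ _ HE]] := Hstep k kn.
  move: eN; rewrite HE inE eE /=.
  have -> : mu k.+1 = mu k.
    rewrite Hm dz; apply: functional_extensionality => x.
    by rewrite /tide_step; case: ifP => _; rewrite addr0.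
  case: k k0 kn eE Hm HE => // k _ kn eE Hm HE.
  have [d' [_ _ _ _ HE']] := Hstep k (ltnW kn).
  by move: (eE); rewrite HE' inE => /andP[_ nr]; rewrite nr.
have H3 : forall u v w, depgraph E cV n mu Ep u v -> mu n [set v; w] <= mu n [set u; v].
  move=> u v w /existsP[[k kn]] /= /andP[/and3P[_ inuv outuv] sv].
  have nvw : [set v; w] \notin Ep k.+1.
    apply/negP => H; apply: (NR k k.+1 _ v (ltnSn k) kn H _ sv).
    by rewrite !inE eqxx.
  rewrite (Fz _ k.+1 n nvw kn (leqnn n)) (Fz [set u; v] k.+1 n outuv kn (leqnn n)).
  exact: L' kn inuv _.
split.
- move=> e1 e2 k1 k2 k12 /and3P[k1n e1in e1out] /and3P[k2n e2in e2out].
  have e2k1 : e2 \in Ep k1 := subsetP (EpA k1 k2 (ltnW k12) (ltnW k2n)) e2 e2in.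
  rewrite (Fz e1 k1.+1 n) // (Fz e2 k2.+1 n) //.
  have [d [d0 _ _ Hm _]] := Hstep k2 k2n.
  have dp : 0 < d.
    rewrite lt_def d0 andbT; apply/eqP => dz.
    exact: (stay k2 e2 d (leq_ltn_trans (leq0n _) k12) k2n e2in e2out Hm dz).
  rewrite Hm /tide_step e2in.
  apply: (@le_lt_trans _ _ (mu k2 e2)); last by rewrite ltrDl.
  apply: le_trans (L' k1 e2 k1n e2k1 e1) _.
  exact: (muM e2 k1.+1 k2 k12 (ltnW k2n)).
- move=> u a b /existsP[[k1 k1n]] /= /andP[/and3P[_ in1 out1] s1].
  move=> /existsP[[k2 k2n]] /= /andP[/and3P[_ in2 out2] s2].
  have eqk : k1 = k2.
    apply/eqP; rewrite eqn_leq; apply/andP; split; rewrite leqNgt; apply/negP => lt.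
    - by apply: (NR k2 k1 _ u lt (ltnW k1n) in1 _ s2); rewrite !inE eqxx orbT.
    - by apply: (NR k1 k2 _ u lt (ltnW k2n) in2 _ s1); rewrite !inE eqxx orbT.
  subst k2.
  rewrite (Fz _ k1.+1 n out1) // (Fz _ k1.+1 n out2) //.
  by apply/le_anti/andP; split; apply: L'.
- by move=> u v w Duv _; exact: H3.
- move=> u0 s; elim: s u0 => [|x s IH] u0 //= /andP[Dx Hp].
  move: (IH x Hp); case: s Hp {IH} => [|y s] //= /andP[Dy _] ->; rewrite andbT.
  exact: H3 Dx.
- have chain : forall k, (k < n)%N -> forall p x, vsat E cV (mu k.+1) x ->
      path (depgraph E cV n mu Ep) x p -> vsat E cV (mu k.+1) (last x p).
    move=> k kn; elim=> [|y p IH] x //= sx /andP[Dxy pth].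
    apply: IH pth.
    move: Dxy => /existsP[[k' k'n]] /= /andP[/and3P[_ in' _] sy].
    have k'k : (k' <= k)%N.
      rewrite leqNgt; apply/negP => lt.
      by apply: (NR k k' _ x lt (ltnW k'n) in' _ sx); rewrite !inE eqxx.
    by apply: (vsatM _ _ _ sy _ kn); rewrite ltnS.
  move=> u v uv /existsP[[k kn]] /= /andP[/and3P[_ inuv outuv] sv].
  apply/negP => /connectP[p pth ulast].
  have su : vsat E cV (mu k.+1) u by rewrite ulast; exact: chain.
  have [d [d0 [_ Hl] _ Hm _]] := Hstep k kn.
  have [dz|dnz] := eqVneq d 0.
    case: k kn inuv outuv sv su Hl Hm => [|k] kn inuv outuv sv su Hl Hm; last first.
      exact: (stay k.+1 [set u; v] d (ltn0Sn k) kn inuv outuv Hm dz).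
    have m10 : mu 1%N = mu 0%N.
      rewrite Hm dz; apply: functional_extensionality => x.
      by rewrite /tide_step; case: ifP => _; rewrite addr0.
    rewrite m10 in su sv.
    by apply: (Hns u v 0%N (leq0n n) uv); split.
  have dp : 0 < d by rewrite lt_def dnz d0.
  have NS : forall x y, [set x; y] \in Ep k -> vsat E cV (mu k) x -> False.
    move=> x y xy /eqP sx.
    have xyE : [set x; y] \in E := subsetP (EpE k (ltnW kn)) _ xy.
    have := Hl x.
    have -> : load E (tide_step (mu k) (Ep k) d) x = load E (mu k) x +
        \sum_(j : V | [set x; j] \in E) (if [set x; j] \in Ep k then d else 0).
      by rewrite /load -big_split.
    rewrite sx.
    rewrite (bigD1 y) //= xy.
    have : 0 <= \sum_(i : V | ([set x; i] \in E) && (i != y))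
                 (if [set x; i] \in Ep k then d else 0).
      by apply: sumr_ge0 => i _; case: ifP.
    move=> H1; rewrite gerDl leNgt => /negP; apply.
    exact: ltr_wpDr H1 dp.
  have fs : forall x y, [set x; y] \in Ep k -> vsat E cV (mu k.+1) x ->
      first_sat E cV mu x k.+1.
    move=> x y xy sx; split => // k' k'k; apply/negP => s'.
    exact: (NS x y xy (vsatM _ _ _ s' k'k (ltnW kn))).
  apply: (Hns u v k.+1 kn uv); first exact: (fs u v).
  apply: (fs v u) => //; by rewrite setUC.
Qed.
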